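(* Let $R \to S$ be a ring homomorphism with the stable prime extension property. (a) If $R$ and $S$ are quasilocal with maximal ideals $\mathfrak{m}$ and $\mathfrak{n}$ and $R \to S$ is a local homomorphism, then the kernel of $R \to S$ is contained in the nilradical of $R$; in particular, if $R$ is reduced then $R \to S$ is injective. (b) For every prime ideal $P$ of $R$, either $PS = S$ or the contraction of $PS$ to $R$ equals $P$.
   Context: All rings are commutative with identity. A ring homomorphism $R \to S$ has the prime extension property if for every prime ideal $P$ of $R$, $PS$ is prime in $S$ or $PS = S$; it has the stable prime extension property if for every $n \ge 0$, $R[X_1,\dots,X_n] \to S[X_1,\dots,X_n]$ has the prime extension property. A quasilocal ring is a ring with a unique maximal ideal (not necessarily Noetherian). *)

(* Defs.v *)
From HB Require Import structures.
From mathcomp Require Import all_boot all_order all_algebra.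
Set Implicit Arguments. Unset Strict Implicit. Unset Printing Implicit Defensive.
Import GRing.Theory.
Local Open Scope ring_scope.

Definition is_ideal (R : comNzRingType) (I : R -> Prop) : Prop :=
  I 0 /\ (forall x y, I x -> I y -> I (x + y)) /\ (forall r x, I x -> I (r * x)).

Definition is_prime_ideal (R : comNzRingType) (I : R -> Prop) : Prop :=
  is_ideal I /\ ~ I 1 /\ (forall a b, I (a * b) -> I a \/ I b).

Definition is_maximal_ideal (R : comNzRingType) (I : R -> Prop) : Prop :=
  is_ideal I /\ ~ I 1 /\
  (forall J : R -> Prop, is_ideal J -> (forall x, I x -> J x) ->
     (forall x, J x <-> I x) \/ (forall x, J x)).

Definition quasilocal_with (R : comNzRingType) (m : R -> Prop) : Prop :=
  is_maximal_ideal m /\ (forall M, is_maximal_ideal M -> forall x, M x <-> m x).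

Definition ext_ideal (A B : comNzRingType) (g : A -> B) (I : A -> Prop) : B -> Prop :=
  fun y => exists (k : nat) (s : 'I_k -> B) (p : 'I_k -> A),
    (forall i, I (p i)) /\ y = \sum_(i < k) s i * g (p i).

Definition prime_ext_prop (A B : comNzRingType) (g : A -> B) : Prop :=
  forall P : A -> Prop, is_prime_ideal P ->
    is_prime_ideal (ext_ideal g P) \/ (forall y, ext_ideal g P y).

(* R[X_1, ..., X_n] as the iterated univariate polynomial ring. *)
Fixpoint polyn (R : comNzRingType) (n : nat) : comNzRingType :=
  match n with
  | 0 => R
  | n'.+1 => ({poly polyn R n'} : comNzRingType)
  end.

Fixpoint polyn_map (R S : comNzRingType) (f : R -> S) (n : nat)
  : polyn R n -> polyn S n :=
  match n return polyn R n -> polyn S n with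
  | 0 => f
  | n'.+1 => map_poly (@polyn_map R S f n')
  end.

Definition stable_prime_ext_prop (R S : comNzRingType) (f : R -> S) : Prop :=
  forall n : nat, prime_ext_prop (@polyn_map R S f n).

(* Main.v *)
Require Import Defs.
From HB Require Import structures.
From mathcomp Require Import all_boot all_order all_algebra zify ring.
From mathcomp Require classical_sets.
From Stdlib Require Import Classical.
Import GRing.Theory.
Set Implicit Arguments. Unset Strict Implicit.
Local Open Scope ring_scope.

Definition ev (R : comNzRingType) (x : R) (h : {poly {poly R}}) : {poly R} :=
  (map_poly (comp_poly (x%:P * 'X^2)) h).[x%:P * 'X].

Lemma ev_step (R : comNzRingType) (x : R) h c :
  ev x (h * 'X + c%:P) = ev x h * (x%:P * 'X) + (c \Po (x%:P * 'X^2)).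
Proof. by rewrite /ev rmorphD rmorphM /= map_polyX map_polyC hornerMXaddC. Qed.

Lemma ev_mul (R : comNzRingType) (x : R) a b : ev x (a * b) = ev x a * ev x b.
Proof. by rewrite /ev rmorphM hornerM. Qed.
Lemma ev_add (R : comNzRingType) (x : R) a b : ev x (a + b) = ev x a + ev x b.
Proof. by rewrite /ev rmorphD hornerD. Qed.
Lemma ev_1 (R : comNzRingType) (x : R) : ev x 1 = 1.
Proof. by rewrite /ev rmorph1 hornerC. Qed.
Lemma ev_0 (R : comNzRingType) (x : R) : ev x 0 = 0.
Proof. by rewrite /ev rmorph0 horner0. Qed.

Lemma compv (R : comNzRingType) (x : R) c :
  (c \Po (x%:P * 'X^2))`_0 = c`_0 /\ (c \Po (x%:P * 'X^2))`_1 = 0.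
Proof.
elim/poly_ind: c => [|c a _]; first by rewrite comp_poly0 !coef0.
rewrite comp_poly_MXaddC mulrA !coefD coefMXn /= coefMXn /= coefC /= coefMX coefC /=.
by rewrite !add0r.
Qed.

Lemma ev_coef (R : comNzRingType) (x : R) h :
  (ev x h)`_0 = h`_0`_0 /\ (ev x h)`_1 = x * h`_1`_0.
Proof.
elim/poly_ind: h => [|h c IH]; first by rewrite ev_0 !coef0 mulr0.
have [c0 c1] := compv x c.
rewrite ev_step !coefD mulrA c0 c1 !coefMX /= coef0M coef0 !coefC /=.
case: IH => -> _.
by rewrite !addr0 mulrC.
Qed.

Lemma ideal_sum (R : comNzRingType) (I : R -> Prop) k (F : 'I_k -> R) :
  is_ideal I -> (forall i, I (F i)) -> I (\sum_(i < k) F i).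
Proof. move=> [I0 [ID _]] H; exact: (big_ind I). Qed.

Lemma ideal_opp (R : comNzRingType) (I : R -> Prop) x : is_ideal I -> I x -> I (- x).
Proof. move=> [_ [_ IM]] Ix; rewrite -mulN1r; exact: IM. Qed.

Lemma ideal_sub (R : comNzRingType) (I : R -> Prop) x y : is_ideal I -> I x -> I y -> I (x - y).
Proof. move=> hI Ix Iy; case: (hI) => [_ [ID _]]; apply: ID => //; exact: ideal_opp. Qed.

Lemma ext_ideal_sub (A B : comNzRingType) (g : A -> B) (I : A -> Prop) (J : B -> Prop) y :
  is_ideal J -> (forall q, I q -> J (g q)) -> ext_ideal g I y -> J y.
Proof.
move=> hJ H [k [s [p [Hp ->]]]]; apply: ideal_sum => // i.
case: hJ => [_ [_ JM]]; apply: JM; exact: H.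
Qed.

Lemma ext_ideal_gen (A B : comNzRingType) (g : A -> B) (I : A -> Prop) q :
  I q -> ext_ideal g I (g q).
Proof.
move=> Iq; exists 1%N, (fun _ => 1), (fun _ => q); split => //.
by rewrite big_ord1 mul1r.
Qed.

Lemma preim_prime (A B : comNzRingType) (g : A -> B) (J : B -> Prop) :
  g 0 = 0 -> g 1 = 1 -> (forall a b, g (a + b) = g a + g b) ->
  (forall a b, g (a * b) = g a * g b) ->
  is_prime_ideal J -> is_prime_ideal (fun a => J (g a)).
Proof.
move=> g0 g1 gD gM [[J0 [JD JM]] [J1 Jp]]; split; [split; [|split]|split].
- by rewrite g0.
- by move=> x y Jx Jy; rewrite gD; apply: JD.
- by move=> r x Jx; rewrite gM; apply: JM.
- by rewrite g1.
- by move=> a b; rewrite gM; apply: Jp.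
Qed.

Definition Pt (R : comNzRingType) (P : R -> Prop) (p : {poly R}) := forall i, P p`_i.

Lemma Pt_ideal (R : comNzRingType) (P : R -> Prop) : is_ideal P -> is_ideal (Pt P).
Proof.
move=> hP; case: (hP) => [P0 [PD PM]]; split; [|split].
- by move=> i; rewrite coef0.
- by move=> x y Hx Hy i; rewrite coefD; apply: PD.
- move=> r x Hx i; rewrite coefM; apply: ideal_sum => // j; exact: PM.
Qed.

Lemma Pt_prime (R : comNzRingType) (P : R -> Prop) : is_prime_ideal P -> is_prime_ideal (Pt P).
Proof.
move=> [hI [n1 pr]]; split; first exact: Pt_ideal.
split.
  by move=> H; apply: n1; have := H 0%N; rewrite coef1.
have hP := hI; case: hP => [P0 [PD PM]].
suff H : forall n (a b : {poly R}), (size a + size b <= n)%N -> Pt P (a * b) -> Pt P a \/ Pt P b.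
  by move=> a b; apply: (H _ a b (leqnn _)).
elim=> [|n IH] a b.
  move=> hs _; left => i; have /eqP -> : a == 0 by rewrite -size_poly_eq0; lia.
  by rewrite coef0.
have step : forall a b : {poly R}, (size a + size b <= n.+1)%N -> Pt P (a * b) -> P a`_0 ->
    Pt P a \/ Pt P b.
  move=> {}a {}b hs hab ha0.
  have [az|anz] := eqVneq a 0.
    by left => i; rewrite az coef0.
  pose a' := drop_poly 1 a.
  have ea : a = (a`_0)%:P + a' * 'X.
    apply/polyP => -[|i]; rewrite coefD coefC coefMX /=.
      by rewrite addr0.
    by rewrite add0r coef_drop_poly addn1.
  have ha' : Pt P (a' * b).
    move=> i; have := hab i.+1; rewrite {1}ea mulrDl -mulrA coefD coefCM ['X * b]mulrC mulrA coefMX /=.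
    move=> H; have -> : (a' * b)`_i = (a`_0 * b`_i.+1 + (a' * b)`_i) - a`_0 * b`_i.+1.
      by rewrite addrAC subrr add0r.
    apply: ideal_sub => //; by rewrite mulrC; apply: PM.
  have sa : (size a' + size b <= n)%N.
    rewrite size_drop_poly; move: anz; rewrite -size_poly_eq0; lia.
  case: (IH a' b sa ha') => [Ha'|Hb]; last by right.
  left => -[|i] //; have := Ha' i; by rewrite coef_drop_poly addn1.
move=> hs hab.
case: (classic (P a`_0)) => [ha|ha]; first exact: step.
case: (classic (P b`_0)) => [hb|hb].
  rewrite mulrC in hab; rewrite addnC in hs.
  by case: (step b a hs hab hb); [right|left].
by have := hab 0%N; rewrite coef0M => /pr [].
Qed.

Lemma partb (R S : comNzRingType) (f : {rmorphism R -> S})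
  (hf : stable_prime_ext_prop f) (P : R -> Prop) (hP : is_prime_ideal P) :
  (forall y, ext_ideal f P y) \/ (forall x, ext_ideal f P (f x) <-> P x).
Proof.
have := hf 0%N P hP.
change (is_prime_ideal (ext_ideal f P) \/ (forall y, ext_ideal f P y) ->
  (forall y, ext_ideal f P y) \/ (forall x, ext_ideal f P (f x) <-> P x)).
case=> [hPS|]; last by left.
right => x; split; last exact: ext_ideal_gen.
move=> hx; apply: NNPP => nPx.
case: (hP) => [hPi [nP1 Ppr]]; case: (hPi) => [P0 [PD PM]].
set PS := ext_ideal f P in hPS hx.
case: (hPS) => [hPSi [nPS1 _]]; case: (hPSi) => [PS0 [PSD PSM]].
pose Q : Defs.polyn R 2 -> Prop := fun h => Pt P (ev x h).
have hQ : is_prime_ideal Q :=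
  preim_prime (ev_0 x) (ev_1 x) (ev_add x) (ev_mul x) (Pt_prime hP).
pose f2 := @polyn_map R S f 2.
pose J : Defs.polyn S 2 -> Prop := fun y : {poly {poly S}} => PS y`_0`_0 /\ PS y`_1`_0.
have hJ : is_ideal J.
  split; [|split].
  - by rewrite /J !coef0; split.
  - by move=> a b [a0 a1] [b0 b1]; rewrite /J !coefD; split; apply: PSD.
  - move=> r a [a0 a1]; rewrite /J coef0M coef0M; split; first exact: PSM.
    rewrite coefM big_ord_recr /= big_ord_recr /= big_ord0 add0r subn0 subnn.
    rewrite coefD coef0M coef0M; apply: PSD; exact: PSM.
have QJ : forall q, Q q -> J (f2 q).
  move=> q Qq; have [e0 e1] := ev_coef x q.
  rewrite /J /f2 /= !coef_map_id0 ?map_poly0 ?rmorph0 //; split; apply: ext_ideal_gen.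
    by have := Qq 0%N; rewrite e0.
  by have := Qq 1%N; rewrite e1 => /Ppr [].
have nJX : ~ J ('X : {poly {poly S}}).
  by rewrite /J !coefX /= coef1 /= => -[_].
case: (hf 2%N Q hQ) => [hQS|hQS]; last by apply: nJX; apply: ext_ideal_sub (hQS 'X).
case: (hQS) => [hQSi [_ QSpr]]; case: (hQSi) => [QS0 [QSD QSM]].
set QS := ext_ideal f2 Q in hQS hQSi QSpr QS0 QSD QSM.
have Qw : Q ('X * 'X - ((x%:P * 'X)%:P)).
  rewrite /Q /ev rmorphB rmorphM /= map_polyX map_polyC /= hornerD hornerN hornerM hornerX hornerC.
  rewrite comp_polyM comp_polyX /comp_poly map_polyC hornerC.
  have -> : x%:P * 'X * (x%:P * 'X) - x%:P * (x%:P * 'X^2) = 0 :> {poly R} by ring.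
  by move=> i; rewrite coef0.
have QC : forall p, P p -> Q ((p%:P)%:P).
  move=> p Pp i; rewrite /Q /ev map_polyC hornerC.
  rewrite -[_`_i]/((p%:P \Po (x%:P*'X^2))`_i) comp_polyC coefC.
  by case: (i == 0)%N.
have Jx : QS (((f x)%:P * 'X)%:P).
  pose J' := fun z : S => QS (((z%:P) * 'X)%:P).
  apply: (@ext_ideal_sub _ _ f P J' _ _ _ hx).
    split; [|split].
    - by rewrite /J' mul0r.
    - by move=> a b Ha Hb; rewrite /J' polyCD mulrDl polyCD; apply: QSD.
    - by move=> r a Ha; rewrite /J' [(r * a)%:P]polyCM -mulrA polyCM; apply: QSM.
  move=> p Pp; rewrite /J'.
  have -> : ((f p)%:P * 'X)%:P = ('X%:P) * f2 ((p%:P)%:P).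
    by rewrite /f2 /= !map_polyC /= (map_polyC f) -polyCM mulrC.
  apply: QSM; apply: ext_ideal_gen; exact: QC.
have QSXX : QS ('X * 'X).
  have -> : ('X * 'X : {poly {poly S}}) =
     f2 ('X * 'X - ((x%:P * 'X)%:P)) + ((f x)%:P * 'X)%:P.
    rewrite /f2 /= rmorphB rmorphM /= map_polyX map_polyC /= rmorphM /= map_polyX map_polyC /=.
    by rewrite subrK.
  apply: QSD => //; exact: ext_ideal_gen.
by case: (QSpr _ _ QSXX) => H; apply: nJX; apply: ext_ideal_sub H.
Qed.

Lemma zorn_ideal (R : comNzRingType) (I M : R -> Prop) :
  is_ideal I -> (forall y, I y -> ~ M y) ->
  exists A : R -> Prop, is_ideal A /\ (forall y, I y -> A y) /\
   (forall y, A y -> ~ M y) /\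
   (forall J : R -> Prop, is_ideal J -> (forall y, A y -> J y) ->
      (forall y, J y -> ~ M y) -> forall y, J y -> A y).
Proof.
move=> hI IM; case: (hI) => [I0 [ID IMu]].
pose P' := fun A : R -> Prop => (forall x y, A x -> A y -> A (x + y)) /\
  (forall r x, A x -> A (r * x)) /\ (forall y, A y -> ~ M y) /\
  ((forall y, I y -> A y) \/ (forall y, ~ A y)).
have [A [PA Amax]] : exists A, P' A /\ forall B, classical_sets.proper A B -> ~ P' B.
  apply: classical_sets.Zorn_bigcup => F FP Ftot.
  rewrite /classical_sets.bigcup /=; split; [|split; [|split]].
  - move=> x y [X FX Xx] [Y FY Yy].
    case: (Ftot X Y FX FY) => [XY|YX].
      have [hD _] := FP Y FY; exists Y => //; apply: hD => //; exact: XY.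
    have [hD _] := FP X FX; exists X => //; apply: hD => //; exact: YX.
  - move=> r x [X FX Xx]; exists X => //; have [_ [hM _]] := FP X FX; exact: hM.
  - move=> y [X FX Xy]; have [_ [_ [hd _]]] := FP X FX; exact: hd.
  - case: (classic (exists X, F X /\ forall y, I y -> X y)) => [[X [FX HX]]|nX].
      by left => y Iy; exists X => //; apply: HX.
    right => y [X FX Xy]; have [_ [_ [_ [HX|HX]]]] := FP X FX.
      by apply: nX; exists X.
    exact: (HX y).
case: (PA) => [AD [AM [Ad [AI|Ae]]]]; last first.
  exfalso; apply: (Amax I).
    split; first by move=> y /Ae.
    by move=> H; apply: (Ae 0); apply: H.
  split=> //; split=> //; split=> //; by left.
exists A; split; [split; [exact: AI|split]|split; [|split]] => //.
move=> J [J0 [JD JM]] AJ Jd y Jy; apply: NNPP => nAy.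
apply: (Amax J).
  split=> // H; exact: nAy (H y Jy).
split=> //; split=> //; split=> //; left => z Iz; exact: AJ (AI z Iz).
Qed.

Lemma units_out (R : comNzRingType) (m : R -> Prop) :
  quasilocal_with m -> forall u, ~ m u -> exists v, v * u = 1.
Proof.
move=> [hm hmax] u nmu; apply: NNPP => nex.
pose I := fun y : R => exists r, y = r * u.
have hI : is_ideal I.
  split; [|split].
  - by exists 0; rewrite mul0r.
  - by move=> x y [r1 ->] [r2 ->]; exists (r1 + r2); rewrite mulrDl.
  - by move=> r x [r1 ->]; exists (r * r1); rewrite mulrA.
have [A [hA [IA [Ad Amax]]]] := @zorn_ideal R I (fun y => y = 1) hI
  (fun y '(ex_intro r e) e1 => nex (ex_intro _ r (esym (etrans (esym e1) e)))).
have mA : is_maximal_ideal A.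
  split=> //; split; first by move=> /Ad.
  move=> J hJ AJ; case: (classic (J 1)) => [J1|nJ1].
    right => x; rewrite -[x]mulr1; case: hJ => [_ [_ JM]]; exact: JM.
  left => x; split; last exact: AJ.
  apply: Amax => // y Jy y1; apply: nJ1; by rewrite -y1.
apply: nmu; apply/(hmax A mA); apply: IA; exists 1; by rewrite mul1r.
Qed.

Theorem proposition3p3 (R S : comNzRingType) (f : {rmorphism R -> S})
  (hf : stable_prime_ext_prop f) :
  (* (a) *)
  (forall (m : R -> Prop) (n : S -> Prop),
     quasilocal_with m -> quasilocal_with n ->
     (forall x, m x -> n (f x)) ->
     (forall x, f x = 0 -> exists k : nat, x ^+ k = 0) /\
     ((forall (x : R) (k : nat), x ^+ k = 0 -> x = 0) -> injective f)) /\
  (* (b) *)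
  (forall P : R -> Prop, is_prime_ideal P ->
     (forall y, ext_ideal f P y) \/ (forall x, ext_ideal f P (f x) <-> P x)).
Proof.
split; last exact: partb.
move=> m n hm hn loc.
have nil : forall x, f x = 0 -> exists k : nat, x ^+ k = 0.
  move=> x fx0; apply: NNPP => nk.
  pose I := fun y : R => y = 0.
  have hI : is_ideal I.
    split; [|split]; first by [].
    - by move=> a b -> ->; rewrite addr0.
    - by move=> r a ->; rewrite mulr0.
  have [A [hA [IA [Ad Amax]]]] := @zorn_ideal R I (fun y => exists k, y = x ^+ k) hI
    (fun y e '(ex_intro k e2) => nk (ex_intro _ k (etrans (esym e2) e))).
  case: (hA) => [A0 [AD AM]].
  have pA : is_prime_ideal A.
    split=> //; split; first by move=> /Ad; apply; exists 0%N; rewrite expr0.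
    move=> a b Aab; apply: NNPP => /not_or_and [nAa nAb].
    have gen : forall c, ~ A c -> exists i r d, A d /\ d + r * c = x ^+ i.
      move=> c nAc; apply: NNPP => nex.
      pose Jc := fun y => exists d r, A d /\ y = d + r * c.
      have hJc : is_ideal Jc.
        split; [|split].
        - by exists 0, 0; rewrite mul0r addr0.
        - move=> y1 y2 [d1 [r1 [Ad1 ->]]] [d2 [r2 [Ad2 ->]]].
          exists (d1 + d2), (r1 + r2); split; first exact: AD.
          by rewrite mulrDl addrACA.
        - move=> r y [d1 [r1 [Ad1 ->]]]; exists (r * d1), (r * r1); split; first exact: AM.
          by rewrite mulrDr mulrA.
      apply: nAc; apply: (Amax Jc hJc).
      + by move=> y Ay; exists y, 0; rewrite mul0r addr0.
      + move=> y [d [r [Ad1 ->]]] [i ei]; apply: nex; exists i, r, d; split=> //.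
      + by exists 0, 1; rewrite mul1r add0r.
    have [i [r1 [d1 [Ad1 e1]]]] := gen a nAa.
    have [j [r2 [d2 [Ad2 e2]]]] := gen b nAb.
    apply: (Ad (x ^+ (i + j))); last by exists (i + j)%N.
    have -> : x ^+ (i + j) = (d2 + r2 * b) * d1 + (r1 * a) * d2 + (r1 * r2) * (a * b).
      rewrite exprD -e1 -e2; ring.
    apply: (AD); first apply: (AD).
    - by apply: (AM).
    - by apply: (AM).
    - by apply: (AM).
  have Am : forall y, A y -> m y.
    move=> y Ay; apply: NNPP => nmy; have [v e] := units_out hm nmy.
    apply: (Ad 1); first by rewrite -e; apply: AM.
    by exists 0%N; rewrite expr0.
  case: (partb hf pA) => [whole|H].
    case: hn => [[hnI [nn1 _]] _]; apply: nn1.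
    apply: (ext_ideal_sub hnI _ (whole 1)) => q Aq; apply: loc; exact: Am.
  have Ax : A x.
    apply/H; rewrite fx0 -(rmorph0 f); exact: ext_ideal_gen.
  by apply: (Ad x Ax); exists 1%N; rewrite expr1.
split=> // red a b fab.
have [k hk] : exists k, (a - b) ^+ k = 0 by apply: nil; rewrite rmorphB fab subrr.
by apply/eqP; rewrite -subr_eq0; apply/eqP; apply: red hk.
Qed.
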